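(* Let $m,s,t\in\mathbb{N}_0$ and let $e\in\mathbb{Z}$ with $-t\le e\le s$. Then \[ \begin{bmatrix}m\\ t\end{bmatrix}_q\begin{bmatrix}m+e\\ s\end{bmatrix}_q=\sum_{j\geq 0}q^{(s-j)(t+e-j)}\begin{bmatrix}t+e\\ j\end{bmatrix}_q\begin{bmatrix}s-e\\ s-j\end{bmatrix}_q\begin{bmatrix}m+j\\ s+t\end{bmatrix}_q \] as an identity of polynomials in $q$ (equivalently, for every $q\in\mathbb{C}$).
   Context: For $n\in\mathbb{N}_0$ the $q$-integer is $[n]_q=1+q+\dots+q^{n-1}=\frac{q^n-1}{q-1}$, the $q$-factorial is $[n]_q!=[n]_q[n-1]_q\cdots[1]_q$, and for $n,k\in\mathbb{N}_0$ with $k\le n$ the $q$-binomial coefficient is $\begin{bmatrix}n\\ k\end{bmatrix}_q=\frac{[n]_q!}{[k]_q![n-k]_q!}$, a polynomial in $q$. By convention $\begin{bmatrix}n\\ k\end{bmatrix}_q=0$ whenever $n<k$ (for $k\ge 0$; in particular whenever the top entry $n$ is negative). *)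

(* Defs.v *)
From mathcomp Require Import all_boot all_order all_algebra.
Set Implicit Arguments. Unset Strict Implicit. Unset Printing Implicit Defensive.
Import Order.TTheory GRing.Theory Num.Theory.
Local Open Scope ring_scope.

Definition qint (n : nat) : {poly rat} := \sum_(i < n) 'X^i.
Definition qfact (n : nat) : {poly rat} := \prod_(i < n) qint i.+1.
(* q-binomial [n k]_q = [n]_q! / ([k]_q! [n-k]_q!) for k <= n, 0 if n < k;
   the quotient is exact (polynomial division over a field). *)
Definition qbinom (n k : nat) : {poly rat} :=
  if (k <= n)%N then qfact n %/ (qfact k * qfact (n - k)) else 0.
Definition qbinomz (n : int) (k : nat) : {poly rat} :=
  match n with Posz n' => qbinom n' k | Negz _ => 0 end.

(* Main.v *)
Require Import Defs.
From mathcomp Require Import all_boot all_order all_algebra.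
From mathcomp Require Import zify ring.
Import Order.TTheory GRing.Theory Num.Theory.
Local Open Scope ring_scope.

Fixpoint qbin (n k : nat) : {poly rat} :=
  match n, k with
  | _, 0 => 1
  | 0, _.+1 => 0
  | n'.+1, k'.+1 => qbin n' k' + 'X^(k'.+1) * qbin n' (k'.+1)
  end.

Definition qbp (n k : nat) : {poly rat} := if k is k'.+1 then qbin n k' else 0.

Lemma qbin_gt n k : (n < k)%N -> qbin n k = 0.
Proof.
elim: n k => [|n IH] [|k] //= H.
by rewrite !IH ?mulr0 ?addr0 //; lia.
Qed.

Lemma qbin0 n : qbin n 0 = 1. Proof. by case: n. Qed.

Lemma pascalA n k : qbin n.+1 k = qbp n k + 'X^k * qbin n k.
Proof. by case: k => [|k] /=; rewrite ?qbin0 ?add0r ?mulr1. Qed.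

Lemma qint_add a b : qint (a + b) = qint a + 'X^a * qint b.
Proof.
rewrite /qint big_split_ord /= mulr_sumr; congr (_ + _).
by apply: eq_bigr => i _; rewrite exprD.
Qed.

Lemma qint0 : qint 0 = 0. Proof. by rewrite /qint big_ord0. Qed.

Lemma qfactS n : qfact n.+1 = qfact n * qint n.+1.
Proof. by rewrite /qfact big_ord_recr. Qed.

Lemma qfact0 : qfact 0 = 1. Proof. by rewrite /qfact big_ord0. Qed.

Lemma qint_neq0 n : qint n.+1 != 0.
Proof.
apply/negP => /eqP H.
have := congr1 (horner^~ 1) H.
rewrite horner0 /qint horner_sum.
under eq_bigr do rewrite hornerXn expr1n.
by rewrite sumr_const card_ord => /eqP; rewrite pnatr_eq0.
Qed.

Lemma qfact_neq0 n : qfact n != 0.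
Proof. by rewrite /qfact; apply/prodf_neq0 => i _; apply: qint_neq0. Qed.

Lemma H1 n k : (k <= n)%N -> qbin n k * (qfact k * qfact (n - k)) = qfact n.
Proof.
elim: n k => [|n IH] [|k] //=; rewrite ?qfact0 ?mulr1 ?subn0 ?mul1r //.
move=> Hk.
have E1 := IH k Hk.
have E2 : qbin n k.+1 * (qfact k.+1 * qfact (n - k)) = qint (n - k) * qfact n.
  case: (ltnP k n) => Hkn.
    have -> : (n - k = (n - k.+1).+1)%N by lia.
    by rewrite (qfactS (n - k.+1)) -(IH k.+1 Hkn); ring.
  have -> : (n - k = 0)%N by lia.
  by rewrite qbin_gt ?qint0 ?mul0r //; lia.
have E3 : qint n.+1 = qint k.+1 + 'X^(k.+1) * qint (n - k).
  by rewrite -qint_add; congr qint; lia.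
rewrite subSS (qfactS n) E3.
transitivity ((qbin n k * (qfact k * qfact (n - k))) * qint k.+1 +
   'X^(k.+1) * (qbin n k.+1 * (qfact k.+1 * qfact (n - k)))).
  by rewrite qfactS; ring.
by rewrite E1 E2; ring.
Qed.

Lemma H2 n k : (k <= n)%N -> qbin n k.+1 * (qfact k.+1 * qfact (n - k)) = qint (n - k) * qfact n.
Proof.
move=> Hk; case: (ltnP k n) => Hkn.
  have -> : (n - k = (n - k.+1).+1)%N by lia.
  by rewrite (qfactS (n - k.+1)) -(@H1 _ _ Hkn); ring.
have -> : (n - k = 0)%N by lia.
by rewrite qbin_gt ?qint0 ?mul0r //; lia.
Qed.

Lemma pascalB n k : qbin n.+1 k = 'X^(n.+1 - k) * qbp n k + qbin n k.
Proof.
case: k => [|k]; first by rewrite /= qbin0 mulr0 add0r.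
rewrite [qbp _ _]/= subSS.
case: (ltnP n k) => Hnk.
  by rewrite !qbin_gt ?mulr0 ?addr0 //; lia.
have HD : qfact k.+1 * qfact (n - k) != 0 by rewrite mulf_neq0 // qfact_neq0.
apply: (mulIf HD) => /=.
have E3 : qint n.+1 = qint (n - k) + 'X^(n - k) * qint k.+1.
  by rewrite -qint_add; congr qint; lia.
have -> : qbin n.+1 k.+1 * (qfact k.+1 * qfact (n - k)) = qfact n.+1.
  by rewrite -(@H1 n.+1 k.+1) // subSS.
transitivity ('X^(n - k) * qint k.+1 * (qbin n k * (qfact k * qfact (n - k)))
   + qbin n k.+1 * (qfact k.+1 * qfact (n - k))); last first.
  by rewrite (qfactS k); ring.
rewrite (@H2 _ _ Hnk) (@H1 _ _ Hnk) (qfactS n) E3; ring.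
Qed.

Lemma qbinomE n k : qbinom n k = qbin n k.
Proof.
rewrite /qbinom; case: ifP => Hk.
  by rewrite -(@H1 _ _ Hk) mulpK // mulf_neq0 // qfact_neq0.
by rewrite qbin_gt //; lia.
Qed.
Arguments qbin_gt {n k}. Arguments H1 {n k}. Arguments H2 {n k}.

Definition RS m a b s t : {poly rat} := \sum_(j < s.+1)
  'X^((s - j) * (a - j)) * qbin a j * qbin b (s - j) * qbin (m + j) (s + t).

Lemma Rzero m a b s t : (forall j, j <= a -> j <= s -> m + j < s + t)%N ->
  RS m a b s t = 0.
Proof.
move=> H; rewrite /RS big1 // => j _.
have Hj := ltn_ord j.
case: (ltnP a j) => Ha; first by rewrite (qbin_gt Ha) mulr0 !mul0r.
by rewrite (qbin_gt (H j Ha _)) ?mulr0 //; lia.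
Qed.

Lemma qbin_nn n : qbin n n = 1.
Proof. by elim: n => //= n ->; rewrite qbin_gt ?mulr0 ?addr0. Qed.

Lemma B0 m s t : qbin m t * qbin (m + s) s = RS m (s + t) 0 s t.
Proof.
rewrite /RS big_ord_recr big1 ?add0r; last first.
  move=> j _; have Hj := ltn_ord j.
  have -> : (s - j = (s - j - 1).+1)%N by lia.
  by rewrite /= mulr0 mul0r.
rewrite /=.
rewrite subnn mul0n expr0 mul1r mulr1 add0r.
case: (ltnP m t) => Hmt.
  by rewrite (qbin_gt Hmt) (@qbin_gt (m + s) (s + t)) ?mul0r ?mulr0 //; lia.
have HD : qfact s * qfact t * qfact (m - t) != 0 by rewrite !mulf_neq0 // qfact_neq0.
apply: (mulIf HD) => /=.
have E1 := @H1 _ _ Hmt.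
have E2 : qbin (m + s) s * (qfact s * qfact m) = qfact (m + s).
  by rewrite -(@H1 (m + s) s _) ?addnK //; lia.
have E3 : qbin (s + t) s * (qfact s * qfact t) = qfact (s + t).
  by rewrite -(@H1 (s + t) s _) ?addKn //; lia.
have E4 : qbin (m + s) (s + t) * (qfact (s + t) * qfact (m - t)) = qfact (m + s).
  by rewrite -(@H1 (m + s) (s + t) _) //; [congr (_ * (_ * qfact _)); lia | lia].
transitivity (qbin (m + s) s * (qfact s * (qbin m t * (qfact t * qfact (m - t))))).
  by ring.
rewrite E1 E2 -E4 -E3; ring.
Qed.

Lemma core m : forall n a b s t, (n + t = m + a)%N -> (s + t = a + b)%N ->
  qbin m t * qbin n s = RS m a b s t.
Proof.
elim: m => [|m IH] n a b s t Hn Hs.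
- case: t Hn Hs => [|t] Hn Hs.
  + rewrite addn0 add0n in Hn; subst n.
    rewrite /RS big_ord_recr big1 /=; last first.
      move=> j _; have Hj := ltn_ord j.
      by rewrite (@qbin_gt (0 + j) (s + 0)) ?mulr0 //; lia.
    by rewrite subnn mul0n expr0 mul1r add0n addn0 qbin_nn mulr1 add0r qbin0 mulr1.
  + rewrite Rzero; first by rewrite (@qbin_gt 0 t.+1) ?mul0r.
    move=> j _ Hj; lia.
- case: n Hn => [|n] Hn.
  + case: (boolP ((s == 0) && (a == 0))%N) => Hsa.
    * move/andP: Hsa => [/eqP Hs0 /eqP Ha0]; subst s a.
      have Ht : t = m.+1 by lia.
      have Hb : b = m.+1 by lia.
      subst t b; rewrite /RS big_ord1 !sub0n mul0n expr0 mul1r addn0 add0n.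
      by rewrite !qbin_nn !qbin0 !mulr1.
    * rewrite Rzero; last first.
        move=> j Hja Hjs; move: Hsa; case: s Hs Hjs Hja => [|s] Hs Hjs Hja /=.
          case: a Hn Hs Hja => [|a] //= Hn Hs Hja _; lia.
        move=> _; lia.
      move: Hsa; case: s Hs => [|s] Hs; last by rewrite (@qbin_gt 0 s.+1) ?mulr0.
      case: a Hn Hs => [|a] // Hn Hs _.
      by rewrite (@qbin_gt m.+1 t) ?mul0r //; lia.
  + case: b Hs => [|b] Hs.
    * have -> : n.+1 = (m.+1 + s)%N by lia.
      have -> : a = (s + t)%N by lia.
      exact: B0.
    * set N := (a + b)%N.
      have hst : (s + t = N.+1)%N by rewrite /N; lia.
      have IH1 := IH n a b.+1 s t ltac:(lia) Hs.
      have F3 : qbp m t * qbin n.+1 s = \sum_(j < s.+1)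
          'X^((s - j) * (a - j)) * qbin a j * qbin b (s - j) * qbin (m + j) N.
        case: t Hn Hs IH1 hst => [|t] Hn Hs _ hst.
        - rewrite mul0r; symmetry; apply: big1 => j _.
          have Hj := ltn_ord j.
          case: (ltnP a j) => Ha; first by rewrite (qbin_gt Ha) mulr0 !mul0r.
          by rewrite (@qbin_gt b (s - j)) ?mulr0 ?mul0r //; lia.
        - rewrite /= (IH n.+1 a b s t); try lia.
          by rewrite /RS (_ : (s + t = N)%N) //; lia.
      have F2 : 'X^t * qbin m t * qbp n s = \sum_(j < s.+1)
          'X^((s - j) * (a - j)) * qbin a j * ('X^(b.+1 - (s - j)) * qbp b (s - j))
            * qbin (m + j) N.
        case: s Hs IH1 hst F3 => [|s] Hs _ hst _.
        - by rewrite /= mulr0 big_ord1 !(mulr0, mul0r).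
        - rewrite /= -mulrA (IH n a b s t); try lia.
          rewrite /RS [RHS]big_ord_recr /= subnn /= !(mulr0, mul0r) addr0 mulr_sumr.
          apply: eq_bigr => j _.
          have Hj := ltn_ord j.
          have -> : (s.+1 - j = (s - j).+1)%N by lia.
          rewrite /= (_ : (s + t = N)%N); last by lia.
          case: (ltnP a j) => Ha; first by rewrite (qbin_gt Ha) !(mulr0, mul0r).
          case: (ltnP b (s - j)) => Hb; first by rewrite (qbin_gt Hb) !(mulr0, mul0r).
          transitivity ('X^(t + (s - j) * (a - j)) * (qbin a j * qbin b (s - j) * qbin (m + j) N)).
            by rewrite exprD; ring.
          have -> : (t + (s - j) * (a - j) = (s - j).+1 * (a - j) + (b.+1 - (s - j).+1))%N.
            by nia.
          by rewrite exprD; ring.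
      have F1 : RS m.+1 a b.+1 s t = 'X^(s + t) * RS m a b.+1 s t +
          \sum_(j < s.+1) 'X^((s - j) * (a - j)) * qbin a j *
             ('X^(b.+1 - (s - j)) * qbp b (s - j)) * qbin (m + j) N +
          \sum_(j < s.+1)
          'X^((s - j) * (a - j)) * qbin a j * qbin b (s - j) * qbin (m + j) N.
        rewrite /RS mulr_sumr -!big_split; apply: eq_bigr => j _.
        rewrite addSn (pascalA (m + j)) (pascalB b).
        have -> : qbp (m + j) (s + t) = qbin (m + j) N by rewrite hst.
        rewrite /=; ring.
      rewrite F1 -IH1 -F2 -F3 (pascalA m t) (pascalA n s) exprD; ring.
Qed.

Theorem theorem1p1 (m s t : nat) (e : int)
  (he1 : - (t%:Z) <= e) (he2 : e <= s%:Z) :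
  qbinom m t * qbinomz (m%:Z + e) s =
  \sum_(j < s.+1)
     'X^((s - j) * (absz (t%:Z + e) - j)) * qbinomz (t%:Z + e) j
       * qbinomz (s%:Z - e) (s - j) * qbinom (m + j) (s + t).
Proof.
set a := absz (t%:Z + e); set b := absz (s%:Z - e).
have ha : t%:Z + e = a%:Z by rewrite /a; lia.
have hb : s%:Z - e = b%:Z by rewrite /b; lia.
have hst : (s + t = a + b)%N by rewrite /a /b; lia.
rewrite ha hb qbinomE.
under eq_bigr do rewrite /= !qbinomE.
case: (lerP 0 (m%:Z + e)) => hm.
  set n := absz (m%:Z + e).
  have hn : m%:Z + e = n%:Z by rewrite /n; lia.
  rewrite hn /= qbinomE (core m n a b s t) //.
  by rewrite /n /a; lia.
have -> : qbinomz (m%:Z + e) s = 0.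
  by case: (m%:Z + e) hm => //.
rewrite mulr0; symmetry; apply: (Rzero m a b s t).
move=> j Hja Hjs; rewrite /a in Hja; lia.
Qed.
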